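(* Let $n\ge 2$, $k\ge 1$, and let $\pi$ be an even permutation of the vertex set $\{0,\dots,k+1\}$ of $K_{k+2}$. Then $c_{n,k}\simeq \pi\circ c_{n,k}$ as graph homomorphisms $\overline{SG}_{n,k}\to K_{k+2}$.
   Context: Let $m=2n+k$. A subset $S\subseteq\{0,\dots,m-1\}$ is semi-stable if $\{i,i+1\}\not\subseteq S$ for all $0\le i\le m-2$. The semi-stable Kneser graph $\overline{SG}_{n,k}$ has as vertices the semi-stable $n$-element subsets of $\{0,\dots,m-1\}$, two being adjacent iff they are disjoint. $K_{k+2}$ is the loopless complete graph on $\{0,\dots,k+1\}$, and $c_{n,k}\colon\overline{SG}_{n,k}\to K_{k+2}$ is the canonical colouring $S\mapsto\min S$. For graphs $G,H$ and maps $f,g\colon V(G)\to V(H)$, write $f\sim g$ if $(f(u),g(v))\in E(H)$ for all $(u,v)\in E(G)$. For graph homomorphisms $f,g\colon G\to H$, $f\simeq g$ means there are graph homomorphisms $f=f_0,f_1,\dots,f_N=g$ ($N\ge0$) with $f_{i}\sim f_{i+1}$ for all $i$. *)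

(* Defs.v *)
From mathcomp Require Import all_boot all_order all_fingroup.
Set Implicit Arguments. Unset Strict Implicit. Unset Printing Implicit Defensive.

Definition semi_stable (m : nat) (S : {set 'I_m}) : bool :=
  [forall i : 'I_m, forall j : 'I_m, (val j == (val i).+1) ==> ~~ ((i \in S) && (j \in S))].

Definition ssk_vertex_pred (n k : nat) (S : {set 'I_(2 * n + k)}) : bool :=
  @semi_stable (2 * n + k) S && (#|S| == n).

Definition SSK (n k : nat) := {S : {set 'I_(2 * n + k)} | @ssk_vertex_pred n k S}.

Definition ssk_adj (n k : nat) (S T : SSK n k) : bool :=
  [disjoint val S & val T].

Definition K_adj (k : nat) (a b : 'I_(k.+2)) : bool := a != b.

Definition canon_col (n k : nat) (S : SSK n k) : 'I_(k.+2) :=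
  inord (\big[minn/(2 * n + k)]_(i in val S) val i).

Definition rel_maps (V W : Type) (eG : V -> V -> bool) (eH : W -> W -> bool)
  (f g : V -> W) : Prop := forall u v, eG u v -> eH (f u) (g v).

Definition is_hom (V W : Type) (eG : V -> V -> bool) (eH : W -> W -> bool)
  (f : V -> W) : Prop := rel_maps eG eH f f.

Definition hom_homotopic (V W : Type) (eG : V -> V -> bool) (eH : W -> W -> bool)
  (f g : V -> W) : Prop :=
  exists (N : nat) (F : nat -> V -> W),
    F 0 = f /\ F N = g /\
    (forall i, i <= N -> is_hom eG eH (F i)) /\
    (forall i, i < N -> rel_maps eG eH (F i) (F i.+1)).

(* Main.v *)
Require Import Defs.
From mathcomp Require Import all_boot all_order all_fingroup zify.
From Stdlib Require Import FunctionalExtensionality.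
Set Implicit Arguments. Unset Strict Implicit. Unset Printing Implicit Defensive.

Lemma hh_step V W eG eH (f g : V -> W) : is_hom eG eH f -> is_hom eG eH g ->
  rel_maps eG eH f g -> hom_homotopic eG eH f g.
Proof.
move=> hf hg hfg; exists 1, (fun i => if i == 0 then f else g).
split => //; split => //; split.
- by case=> [|[|i]].
- by case.
Qed.

Lemma hh_refl V W eG eH (f : V -> W) : is_hom eG eH f -> hom_homotopic eG eH f f.
Proof.
move=> hf; exists 0, (fun _ => f); split => //; split => //; split => //.
Qed.

Lemma hh_trans V W eG eH (f g h : V -> W) : hom_homotopic eG eH f g ->
  hom_homotopic eG eH g h -> hom_homotopic eG eH f h.
Proof.
move=> [N1 [F1 [F10 [F1N [F1h F1r]]]]] [N2 [F2 [F20 [F2N [F2h F2r]]]]].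
exists (N1 + N2), (fun i => if i < N1 then F1 i else F2 (i - N1)).
split; first by case: N1 F1N F1h F1r F10 => [|N1] //= F1N _ _ F10; rewrite F20 -F1N F10.
split.
  case: ltnP => H; first by lia.
  by rewrite addKn.
split.
  move=> i Hi; case: ltnP => H; first by apply: F1h; lia.
  by apply: F2h; lia.
move=> i Hi; case: (ltnP i N1) => H.
  case: (ltnP i.+1 N1) => H'; first by apply: F1r.
  have -> : i.+1 - N1 = 0 by lia.
  rewrite F20 -F1N; have -> : N1 = i.+1 by lia.
  by apply: F1r.
case: (ltnP i.+1 N1) => H'; first by lia.
have -> : i.+1 - N1 = (i - N1).+1 by lia.
by apply: F2r; lia.
Qed.

Lemma hh_sym V W (eG : V -> V -> bool) (eH : W -> W -> bool) (f g : V -> W) :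
  (forall u v, eG u v -> eG v u) -> (forall a b, eH a b -> eH b a) ->
  hom_homotopic eG eH f g -> hom_homotopic eG eH g f.
Proof.
move=> sG sH [N [F [F0 [FN [Fh Fr]]]]].
exists N, (fun i => F (N - i)); split; first by rewrite subn0.
split; first by rewrite subnn.
split; first by move=> i Hi; apply: Fh; lia.
move=> i Hi u v Huv.
have := Fr (N - i.+1) ltac:(lia) v u (sG _ _ Huv).
have -> : (N - i.+1).+1 = N - i by lia.
by move/sH.
Qed.

Lemma hh_comp V W eG (eH : W -> W -> bool) (p : W -> W) (f g : V -> W) :
  (forall a b, eH a b -> eH (p a) (p b)) ->
  hom_homotopic eG eH f g -> hom_homotopic eG eH (fun x => p (f x)) (fun x => p (g x)).
Proof.
move=> hp [N [F [F0 [FN [Fh Fr]]]]].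
exists N, (fun i x => p (F i x)); split; first by rewrite F0.
split; first by rewrite FN.
split; first by move=> i Hi u v /(Fh i Hi); apply: hp.
by move=> i Hi u v /(Fr i Hi); apply: hp.
Qed.

Lemma hh_ext V W eG eH (f f' g g' : V -> W) : f =1 f' -> g =1 g' ->
  hom_homotopic eG eH f g -> hom_homotopic eG eH f' g'.
Proof.
move=> /functional_extensionality -> /functional_extensionality -> //.
Qed.
Definition mn n k (S : SSK n k) : nat := \big[minn/(2*n+k)]_(i in val S) nat_of_ord i.
Definition mx n k (S : SSK n k) : nat := \max_(i in val S) nat_of_ord i.

Lemma vcard n k (S : SSK n k) : #|val S| = n.
Proof. by case/andP: (valP S) => _ /eqP. Qed.

Lemma ss_noadj n k (S : SSK n k) (i j : 'I_(2*n+k)) :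
  i \in val S -> j \in val S -> nat_of_ord j = (nat_of_ord i).+1 -> False.
Proof.
case/andP: (valP S) => /forallP/(_ i)/forallP/(_ j)/implyP H _ Hi Hj Hij.
by move: (H (introT eqP Hij)); rewrite Hi Hj.
Qed.

Lemma minseq_le m (l : seq 'I_m) x : x \in l -> \big[minn/m]_(i <- l) nat_of_ord i <= nat_of_ord x.
Proof.
elim: l => [|y l IH] //; rewrite inE big_cons => /orP [/eqP -> | /IH H].
  exact: geq_minl.
by rewrite geq_min H orbT.
Qed.

Lemma minseq_in m (l : seq 'I_m) : l != [::] ->
  exists2 x, x \in l & \big[minn/m]_(i <- l) nat_of_ord i = nat_of_ord x.
Proof.
elim: l => [|y l IH] // _; rewrite big_cons.
case: l IH => [|z l] IH.
  exists y; first by rewrite inE.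
  rewrite big_nil; have : nat_of_ord y < m := ltn_ord y. lia.
case: IH => // x Hx ->.
case: (leqP (nat_of_ord y) (nat_of_ord x)) => H.
  by exists y; [rewrite inE eqxx | lia].
by exists x; [rewrite inE Hx orbT | have : nat_of_ord y < m := ltn_ord y; lia].
Qed.

Lemma mn_le n k (S : SSK n k) i : i \in val S -> mn S <= nat_of_ord i.
Proof. by move=> Hi; rewrite /mn -big_filter; apply: minseq_le; rewrite mem_filter Hi mem_index_enum. Qed.

Lemma mn_in n k (S : SSK n k) : 0 < n -> exists2 i, i \in val S & nat_of_ord i = mn S.
Proof.
move=> hn; rewrite /mn -big_filter.
case: (@minseq_in _ [seq i <- index_enum _ | i \in val S]).
  have : 0 < #|val S| by rewrite vcard.
  case/card_gt0P => x Hx; apply/eqP => E.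
  have : x \in [seq i <- index_enum _ | i \in val S] by rewrite mem_filter Hx mem_index_enum.
  by rewrite E.
by move=> x; rewrite mem_filter => /andP [Hx _] ->; exists x.
Qed.

Lemma mx_ge n k (S : SSK n k) i : i \in val S -> nat_of_ord i <= mx S.
Proof. by move=> Hi; apply: leq_bigmax_cond. Qed.

Lemma mx_in n k (S : SSK n k) : 0 < n -> exists2 i, i \in val S & nat_of_ord i = mx S.
Proof.
move=> hn; have H : 0 < #|val S| by rewrite vcard.
rewrite /mx; case: (eq_bigmax_cond (fun i : 'I_(2*n+k) => nat_of_ord i) H) => i Hi ->; by exists i.
Qed.

Lemma mx_lt n k (S : SSK n k) : 0 < n -> mx S < 2*n+k.
Proof. by move=> /(mx_in S) [i _ <-]. Qed.

Lemma ss_count n k (S : SSK n k) a j :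
  #|[set i in val S | a <= nat_of_ord i < a + 2*j]| <= j.
Proof.
elim: j => [|j IH].
  rewrite (_ : [set _ in _ | _] = set0) ?cards0 //.
  by apply/setP => i; rewrite !inE; apply/negbTE/negP => /andP [_ /andP [H1 H2]]; lia.
set B := [set i in val S | a + 2*j <= nat_of_ord i < a + 2*j.+1].
have sub : [set i in val S | a <= nat_of_ord i < a + 2 * j.+1] \subset
    [set i in val S | a <= nat_of_ord i < a + 2*j] :|: B.
  apply/subsetP => i; rewrite !inE => /andP [-> /andP [H1 H2]] /=.
  by case: (ltnP (nat_of_ord i) (a + 2*j)) => H; rewrite ?H1 //.
have cB : #|B| <= 1.
  apply/card_le1P => x Hx y; rewrite /B !inE in Hx *.
  apply/idP/eqP => [Hy|->]; last by [].
  apply/val_inj; case/andP: Hx => Sx Hx; case/andP: Hy => Sy Hy.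
  case: (ltngtP (nat_of_ord x) (nat_of_ord y)) => // H.
    by exfalso; apply: (ss_noadj Sx Sy); lia.
  by exfalso; apply: (ss_noadj Sy Sx); lia.
apply: (leq_trans (subset_leq_card sub)).
rewrite cardsU; lia.
Qed.

Lemma span n k (S : SSK n k) : 0 < n -> mn S + 2*n <= mx S + 2.
Proof.
move=> hn; rewrite leqNgt; apply/negP => H.
have sub : val S \subset [set i in val S | mn S <= nat_of_ord i < mn S + 2*n.-1].
  apply/subsetP => i Hi; rewrite inE Hi mn_le //=.
  have := mx_ge Hi; lia.
have := leq_trans (subset_leq_card sub) (ss_count S (mn S) n.-1).
rewrite vcard; lia.
Qed.

Lemma adj_sym n k (S T : SSK n k) : ssk_adj S T -> ssk_adj T S.
Proof. by rewrite /ssk_adj disjoint_sym. Qed.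

Lemma adj_mn n k (S T : SSK n k) : 0 < n -> ssk_adj S T -> mn S != mn T.
Proof.
move=> hn H; apply/eqP => E.
case: (mn_in S hn) => i Hi Ei; case: (mn_in T hn) => j Hj Ej.
have ij : i = j by apply: ord_inj; rewrite /= Ei Ej.
by move: (disjointFr H Hi); rewrite ij Hj.
Qed.

Lemma adj_mx n k (S T : SSK n k) : 0 < n -> ssk_adj S T -> mx S != mx T.
Proof.
move=> hn H; apply/eqP => E.
case: (mx_in S hn) => i Hi Ei; case: (mx_in T hn) => j Hj Ej.
have ij : i = j by apply: ord_inj; rewrite /= Ei Ej.
by move: (disjointFr H Hi); rewrite ij Hj.
Qed.

Definition Fh n k (h : nat) (S : SSK n k) : nat :=
  if mx S <= h then mn S else mx S + 2 - 2*n.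

Lemma Fh_bound n k h (S : SSK n k) : 0 < n -> Fh h S <= k.+1.
Proof. move=> hn; rewrite /Fh; have := span S hn; have := mx_lt S hn; case: ifP => ?; lia. Qed.

Definition homN n k (f : SSK n k -> nat) := forall u v, ssk_adj u v -> f u != f v.

Lemma Fh_hom n k h : 0 < n -> homN (@Fh n k h).
Proof.
move=> hn S T H; have := adj_mn hn H; have := adj_mx hn H; have := span S hn; have := span T hn.
rewrite /Fh; case: ifP => ?; case: ifP => ?; lia.
Qed.

Definition col n k (f : SSK n k -> nat) (S : SSK n k) : 'I_(k.+2) := inord (f S).

Lemma col_neq n k (f g : SSK n k -> nat) u v : f u <= k.+1 -> g v <= k.+1 ->
  (col f u != col g v) = (f u != g v).
Proof. by move=> hf hg; rewrite /col -val_eqE /= !inordK. Qed.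

Lemma move n k (f g : SSK n k -> nat) :
  (forall S, f S <= k.+1) -> (forall S, g S <= k.+1) -> homN f ->
  (forall u v, ssk_adj u v -> f v != g v -> f u != g v) ->
  (forall u v, ssk_adj u v -> (f u == g u) || (f v == g v)) ->
  homN g /\ hom_homotopic (@ssk_adj n k) (@K_adj k) (col f) (col g).
Proof.
move=> bf bg hf c2 c3.
have rfg : forall u v, ssk_adj u v -> f u != g v.
  move=> u v H; case: (eqVneq (f v) (g v)) => [<-|]; [exact: hf | exact: c2].
have hg : homN g.
  move=> u v H; case/orP: (c3 u v H) => /eqP E.
  - by rewrite -E; apply: rfg.
  - by rewrite -E eq_sym; apply: rfg; apply: adj_sym.
split => //; apply: hh_step => u v H; rewrite /K_adj col_neq //;
  [exact: hf | exact: hg | exact: rfg].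
Qed.

Lemma sweep_step n k h : 0 < n ->
  hom_homotopic (@ssk_adj n k) (@K_adj k) (col (Fh h)) (col (Fh h.-1)).
Proof.
move=> hn; apply: (proj2 (move _ _ _ _ _)).
- by move=> S; apply: Fh_bound.
- by move=> S; apply: Fh_bound.
- exact: Fh_hom.
- move=> u v H; have := adj_mn hn H; have := adj_mx hn H; have := span u hn; have := span v hn.
  rewrite /Fh; case: ifP => ?; case: ifP => ?; case: ifP => ?; lia.
- move=> u v H; have := adj_mx hn H; rewrite /Fh; case: ifP => ?; case: ifP => ?; case: ifP => ?; case: ifP => ?; lia.
Qed.

Lemma sweep n k d : 0 < n ->
  hom_homotopic (@ssk_adj n k) (@K_adj k) (col (Fh (2*n+k))) (col (Fh (2*n+k-d))).
Proof.
move=> hn; elim: d => [|d IH].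
  rewrite subn0; apply: hh_refl => u v H; rewrite /K_adj col_neq ?Fh_bound //; exact: Fh_hom.
apply: (hh_trans IH); have -> : 2*n+k-d.+1 = (2*n+k-d).-1 by lia.
exact: sweep_step.
Qed.

Lemma card_interval m a d : #|[set i : 'I_m | a <= i < a + d]| <= d.
Proof.
elim: d => [|d IH].
  rewrite (_ : [set _ | _] = set0) ?cards0 //.
  by apply/setP => i; rewrite !inE; apply/negbTE/negP => /andP [H1 H2]; lia.
set B := [set i : 'I_m | a + d <= i < a + d.+1].
have sub : [set i : 'I_m | a <= i < a + d.+1] \subset [set i : 'I_m | a <= i < a + d] :|: B.
  apply/subsetP => i; rewrite !inE => /andP [H1 H2].
  by case: (ltnP (nat_of_ord i) (a + d)) => H; rewrite ?H1 ?H2 ?H //= orbT.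
have cB : #|B| <= 1.
  apply/card_le1P => x Hx y; rewrite /B !inE in Hx *.
  apply/idP/eqP => [Hy|->]; last by [].
  apply/ord_inj; lia.
apply: (leq_trans (subset_leq_card sub)); rewrite cardsU; lia.
Qed.

Lemma cover_lemma (T : finType) (A B W : {set T}) n x : [disjoint A & B] -> #|A| = n -> #|B| = n ->
  A :|: B \subset W -> #|W| <= 2 * n -> x \in W -> x \notin A -> x \in B.
Proof.
move=> dAB cA cB sub cW xW xA.
have cU : #|A :|: B| = 2 * n by rewrite cardsU (disjoint_setI0 dAB) cards0 cA cB; lia.
have E : A :|: B = W by apply/eqP; rewrite eqEcard sub cU.
by move: xW; rewrite -E inE (negbTE xA).
Qed.

Definition inner n k lo (S : SSK n k) : bool := (lo <= mn S) && (mx S <= lo + 2*n).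
Definition isP n k lo (S : SSK n k) : bool :=
  [&& inner lo S, mn S == lo &
    [exists T : SSK n k, [&& inner lo T, mn T == lo+2 & ssk_adj S T]]].
Definition adjP n k lo (S : SSK n k) : bool := [exists P : SSK n k, isP lo P && ssk_adj S P].

Lemma inner_mn n k lo (S : SSK n k) : 0 < n -> inner lo S -> lo <= mn S <= lo + 2.
Proof. by move=> hn /andP [H1 H2]; have := span S hn; lia. Qed.

Lemma inner_range n k lo (S : SSK n k) i : inner lo S -> i \in val S -> mn S <= i <= lo + 2*n.
Proof. move=> /andP [_ H] Hi; rewrite mn_le //=; exact: leq_trans (mx_ge Hi) H. Qed.

Lemma ar1 a c lo n : a <= c <= lo + 2*n -> lo + 1 <= a -> lo+1 <= c < lo+1+2*n.
Proof. lia. Qed.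
Lemma ar2 a c lo n : a <= c <= lo + 2*n -> lo + 2 = a ->
  (lo <= c < lo + 1) || (lo+2 <= c < lo+2+(2*n-1)).
Proof. lia. Qed.
Lemma ar3 c lo n : lo <= c <= lo + 2*n -> c != lo + 1 ->
  (lo <= c < lo + 1) || (lo+2 <= c < lo+2+(2*n-1)).
Proof. lia. Qed.

Lemma keyfact n k lo (S T : SSK n k) : 1 < n -> lo < k -> inner lo S -> mn S = lo+2 ->
  inner lo T -> mn T = lo+1 -> ssk_adj S T -> adjP lo T -> False.
Proof.
move=> hn hk iS mS iT mT aST /existsP [P /andP [/and3P [iP /eqP mP /existsP [R /and3P [iR /eqP mR aPR]]] aTP]].
have hn0 : 0 < n by apply: ltnW.
have xlt : lo + 3 < 2 * n + k by clear -hn hk; lia.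
pose x := Ordinal xlt.
have [e eS ve] := mn_in S hn0.
have [e' eR ve'] := mn_in R hn0.
have [e'' eP ve''] := mn_in P hn0.
have xT : x \in val T.
  apply: (@cover_lemma _ (val S) (val T) [set i : 'I_(2*n+k) | lo+1 <= i < lo+1 + 2*n] n).
  - exact: aST.
  - exact: vcard.
  - exact: vcard.
  - apply/subsetP => i; rewrite !inE => /orP [] Hi.
      by apply: (ar1 (inner_range iS Hi)); rewrite mS leq_add2l.
    by apply: (ar1 (inner_range iT Hi)); rewrite mT.
  - exact: card_interval.
  - rewrite inE /=; clear -hn; lia.
  - apply/negP => xS; apply: (ss_noadj eS xS); rewrite /= ve mS; clear; lia.
have xP : x \in val P.
  apply: (@cover_lemma _ (val R) (val P) ([set i : 'I_(2*n+k) | lo <= i < lo + 1] :|: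
      [set i : 'I_(2*n+k) | lo+2 <= i < lo+2 + (2*n-1)]) n).
  - by rewrite /ssk_adj disjoint_sym in aPR.
  - exact: vcard.
  - exact: vcard.
  - apply/subsetP => i; rewrite !inE => /orP [] Hi.
      by apply: (ar2 (inner_range iR Hi)); rewrite mR.
    apply: ar3.
      by have := inner_range iP Hi; rewrite mP.
    apply/eqP => E; apply: (ss_noadj eP Hi); rewrite E ve'' mP; clear; lia.
  - apply: (leq_trans (leq_card_setU _ _)).
    apply: leq_trans (leq_add (card_interval (2*n+k) lo 1) (card_interval (2*n+k) (lo+2) (2*n-1))) _.
    clear -hn; lia.
  - rewrite !inE /=; apply/orP; right; clear -hn; lia.
  - apply/negP => xR; apply: (ss_noadj eR xR); rewrite /= ve' mR; clear; lia.
by move: (disjointFr aTP xT); rewrite xP.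
Qed.

Definition hst (j a : nat) (p q : bool) : nat :=
  if a == 0 then (if ((1 <= j) && ~~ p) || (4 <= j) then 2 else 0)
  else if a == 1 then (if ((2 <= j) && ~~ q) || (5 <= j) then 0 else 1)
  else (if 3 <= j then 1 else 2).

Lemma hst_le j a p q : hst j a p q <= 2.
Proof. by rewrite /hst; do !case: ifP. Qed.

Lemma hcheck j au av pu qu pv qv : j < 5 ->
  [&& au <= 2, av <= 2, au != av, pu ==> (au == 0), pv ==> (av == 0),
      (au == 2) && (av == 0) ==> pv, (av == 2) && (au == 0) ==> pu,
      pu ==> qv, pv ==> qu, ~~ [&& au == 2, av == 1 & qv] & ~~ [&& av == 2, au == 1 & qu]] ->
  ((hst j.+1 av pv qv != hst j av pv qv) ==> (hst j au pu qu != hst j.+1 av pv qv)) &&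
  ((hst j au pu qu == hst j.+1 au pu qu) || (hst j av pv qv == hst j.+1 av pv qv)).
Proof.
case: j => [|[|[|[|[|j]]]]] // _;
case: au => [|[|[|au]]]; case: av => [|[|[|av]]]; by case: pu; case: qu; case: pv; case: qv.
Qed.

Definition G n k lo j (S : SSK n k) : nat :=
  if inner lo S then lo + hst j (mn S - lo) (isP lo S) (adjP lo S) else Fh (lo + 2*n) S.

Lemma G_bound n k lo j (S : SSK n k) : 0 < n -> lo < k -> G lo j S <= k.+1.
Proof.
move=> hn hk; rewrite /G; case: ifP => _; last exact: Fh_bound.
have := hst_le j (mn S - lo) (isP lo S) (adjP lo S); lia.
Qed.

Lemma outer_col n k lo (S : SSK n k) : 0 < n -> ~~ inner lo S ->
  (Fh (lo + 2*n) S < lo) || (lo + 2 < Fh (lo + 2*n) S).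
Proof.
move=> hn; rewrite /inner /Fh; have := span S hn; case: ifP => ?; lia.
Qed.

Lemma inner_data n k lo (u v : SSK n k) : 1 < n -> lo < k -> inner lo u -> inner lo v ->
  ssk_adj u v ->
  let au := mn u - lo in let av := mn v - lo in
  let pu := isP lo u in let pv := isP lo v in let qu := adjP lo u in let qv := adjP lo v in
  [&& au <= 2, av <= 2, au != av, pu ==> (au == 0), pv ==> (av == 0),
      (au == 2) && (av == 0) ==> pv, (av == 2) && (au == 0) ==> pu,
      pu ==> qv, pv ==> qu, ~~ [&& au == 2, av == 1 & qv] & ~~ [&& av == 2, au == 1 & qu]].
Proof.
move=> hn hk iu iv auv /=.
have hn0 : 0 < n by apply: ltnW.
have avu := adj_sym auv.
have ru := inner_mn hn0 iu; have rv := inner_mn hn0 iv.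
have neq := adj_mn hn0 auv.
have P1 : forall (w : SSK n k), isP lo w -> mn w = lo.
  by move=> w /and3P [_ /eqP -> _].
have P2 : forall (w w' : SSK n k), inner lo w -> inner lo w' -> mn w = lo -> mn w' = lo + 2 ->
    ssk_adj w w' -> isP lo w.
  move=> w w' iw iw' mw mw' a; apply/and3P; split => //; first by rewrite mw.
  by apply/existsP; exists w'; rewrite iw' mw' eqxx a.
have P3 : forall (w w' : SSK n k), isP lo w -> ssk_adj w' w -> adjP lo w'.
  by move=> w w' pw a; apply/existsP; exists w; rewrite pw a.
have K1 : ~~ [&& mn u - lo == 2, mn v - lo == 1 & adjP lo v].
  apply/negP => /and3P [/eqP a /eqP b c].
  apply: (keyfact hn hk iu _ iv _ auv c); clear -ru rv a b; lia.
have K2 : ~~ [&& mn v - lo == 2, mn u - lo == 1 & adjP lo u].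
  apply/negP => /and3P [/eqP a /eqP b c].
  apply: (keyfact hn hk iv _ iu _ avu c); clear -ru rv a b; lia.
rewrite K1 K2 !andbT.
apply/and5P; split.
- clear -ru; lia.
- clear -rv; lia.
- clear -ru rv neq; lia.
- by apply/implyP => /P1 ->; rewrite subnn.
- apply/and5P; split.
  + by apply/implyP => /P1 ->; rewrite subnn.
  + apply/implyP => /andP [/eqP a /eqP b]; apply: (P2 v u) => //; clear -ru rv a b; lia.
  + apply/implyP => /andP [/eqP a /eqP b]; apply: (P2 u v) => //; clear -ru rv a b; lia.
  + by apply/implyP => /P3; apply.
  + by apply/implyP => /P3; apply.
Qed.

Lemma G_step n k lo j : 1 < n -> lo < k -> j < 5 -> homN (@G n k lo j) ->
  homN (@G n k lo j.+1) /\
  hom_homotopic (@ssk_adj n k) (@K_adj k) (col (G lo j)) (col (G lo j.+1)).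
Proof.
move=> hn hk hj hG.
have hn0 : 0 < n by apply: ltnW.
apply: move => //.
- by move=> S; apply: G_bound.
- by move=> S; apply: G_bound.
- move=> u v H; rewrite /G.
  case: (boolP (inner lo v)) => iv; last by rewrite eqxx.
  case: (boolP (inner lo u)) => iu.
    have := hcheck hj (inner_data hn hk iu iv H).
    case/andP => /implyP X _; rewrite !eqn_add2l => Y; apply: X; by rewrite eq_sym.
  move=> _; have := outer_col hn0 iu; have := hst_le j.+1 (mn v - lo) (isP lo v) (adjP lo v).
  move: (hst _ _ _ _) (Fh _ u) => a b; clear; lia.
- move=> u v H; rewrite /G.
  case: (boolP (inner lo u)) => iu; last by rewrite eqxx.
  case: (boolP (inner lo v)) => iv; last by rewrite eqxx orbT.
  have := hcheck hj (inner_data hn hk iu iv H).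
  by case/andP => _; rewrite !eqn_add2l.
Qed.

Definition signat (lo x : nat) : nat :=
  if x == lo then lo + 2 else if x == lo + 1 then lo else if x == lo + 2 then lo + 1 else x.

Definition sig3 (k lo : nat) : {perm 'I_(k.+2)} :=
  (tperm (inord lo) (inord (lo + 1)) * tperm (inord (lo + 1)) (inord (lo + 2)))%g.

Lemma inord_eq k x y : x <= k.+1 -> y <= k.+1 ->
  (inord x == inord y :> 'I_(k.+2)) = (x == y).
Proof. by move=> hx hy; rewrite -val_eqE /= !inordK. Qed.

Lemma sig3_val k lo x : lo < k -> x <= k.+1 -> sig3 k lo (inord x) = inord (signat lo x).
Proof.
move=> hk hx; rewrite /sig3 permM /signat.
have h0 : lo <= k.+1 by lia.
have h1 : lo + 1 <= k.+1 by lia.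
have h2 : lo + 2 <= k.+1 by lia.
have d01 : (inord lo : 'I_(k.+2)) != inord (lo + 1) by rewrite inord_eq //; lia.
have d02 : (inord lo : 'I_(k.+2)) != inord (lo + 2) by rewrite inord_eq //; lia.
have d12 : (inord (lo+1) : 'I_(k.+2)) != inord (lo + 2) by rewrite inord_eq //; lia.
case: (eqVneq x lo) => [->|n0].
  by rewrite tpermL tpermL.
case: (eqVneq x (lo + 1)) => [->|n1].
  by rewrite tpermR tpermD // eq_sym.
case: (eqVneq x (lo + 2)) => [->|n2].
  by rewrite (tpermD d02 d12) tpermR.
have e0 : (inord lo : 'I_(k.+2)) != inord x by rewrite inord_eq // eq_sym.
have e1 : (inord (lo+1) : 'I_(k.+2)) != inord x by rewrite inord_eq // eq_sym.
have e2 : (inord (lo+2) : 'I_(k.+2)) != inord x by rewrite inord_eq // eq_sym.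
by rewrite (tpermD e0 e1) (tpermD e1 e2).
Qed.

Lemma canon_colE n k (S : SSK n k) : 0 < n -> canon_col S = col (Fh (2*n+k)) S.
Proof. by move=> hn; rewrite /col /Fh ifT //; apply: ltnW (mx_lt S hn). Qed.

Lemma FhG0 n k lo (S : SSK n k) : 0 < n -> Fh (lo + 2*n) S = G lo 0 S.
Proof.
move=> hn; rewrite /G; case: ifP => // iS.
have r := inner_mn hn iS.
rewrite /Fh ifT; last by case/andP: iS.
rewrite /hst /=; move: r; clear; do !case: eqP; lia.
Qed.

Lemma G5 n k lo (S : SSK n k) : 0 < n -> G lo 5 S = signat lo (Fh (lo + 2*n) S).
Proof.
move=> hn; rewrite /G; case: ifP => iS.
  have r := inner_mn hn iS.
  rewrite /Fh ifT; last by case/andP: iS.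
  rewrite /hst /signat /= !orbT; move: r; clear; do !case: eqP; lia.
have := outer_col hn (negbT iS); rewrite /signat.
move: (Fh _ S) => a H.
rewrite ifF; last by apply/eqP; clear -H; lia.
rewrite ifF; last by apply/eqP; clear -H; lia.
by rewrite ifF //; apply/eqP; clear -H; lia.
Qed.

Lemma homN_hom n k (f : SSK n k -> nat) : (forall S, f S <= k.+1) -> homN f ->
  is_hom (@ssk_adj n k) (@K_adj k) (col f).
Proof. by move=> hb hf u v H; rewrite /K_adj col_neq //; apply: hf. Qed.

Lemma Gchain n k lo j : 1 < n -> lo < k -> j <= 5 ->
  homN (@G n k lo j) /\ hom_homotopic (@ssk_adj n k) (@K_adj k) (col (G lo 0)) (col (G lo j)).
Proof.
move=> hn hk; have hn0 : 0 < n by apply: ltnW.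
have h0 : homN (@G n k lo 0) by move=> u v H; rewrite -!FhG0 //; apply: Fh_hom.
elim: j => [_|j IH hj].
  split => //; apply: hh_refl; apply: homN_hom => // S; exact: G_bound.
case: (IH (ltnW hj)) => hG hh.
case: (G_step hn hk hj hG) => hG' hh'.
by split => //; apply: hh_trans hh hh'.
Qed.

Lemma window n k lo : 1 < n -> lo < k ->
  hom_homotopic (@ssk_adj n k) (@K_adj k) (@canon_col n k)
    (fun S => sig3 k lo (canon_col S)).
Proof.
move=> hn hk; have hn0 : 0 < n by apply: ltnW.
have A : hom_homotopic (@ssk_adj n k) (@K_adj k) (col (Fh (2*n+k))) (col (Fh (lo+2*n))).
  by have := @sweep n k (k - lo) hn0; have -> : 2*n+k-(k-lo) = lo+2*n by clear -hk; lia.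
have B := proj2 (Gchain hn hk (leqnn 5)).
have B' : hom_homotopic (@ssk_adj n k) (@K_adj k) (col (Fh (lo+2*n)))
    (fun S => sig3 k lo (col (Fh (lo+2*n)) S)).
  apply: hh_ext B.
    by move=> S; rewrite /col FhG0.
  by move=> S; rewrite /col G5 // sig3_val // Fh_bound.
have C : hom_homotopic (@ssk_adj n k) (@K_adj k) (fun S => sig3 k lo (col (Fh (lo+2*n)) S))
    (fun S => sig3 k lo (col (Fh (2*n+k)) S)).
  apply: hh_comp; first by move=> a b; rewrite /K_adj (inj_eq perm_inj).
  apply: hh_sym A; [exact: adj_sym | by move=> a b; rewrite /K_adj eq_sym].
apply: hh_ext (hh_trans A (hh_trans B' C)).
  by move=> S; rewrite canon_colE.
by move=> S; rewrite canon_colE.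
Qed.

Definition sadj (k i : nat) : {perm 'I_(k.+2)} := tperm (inord i) (inord (i+1)).

Lemma sadj_neq k i : i <= k -> (inord i : 'I_(k.+2)) != inord (i + 1).
Proof. by move=> hi; rewrite -val_eqE /= !inordK; lia. Qed.

Lemma mid (T : finType) (a b c : {perm T}) : (b * b = 1)%g -> (a * c = (a * b) * (b * c))%g.
Proof. by move=> bb; rewrite mulgA -(mulgA a) bb mulg1. Qed.

Lemma sadj2 k i : (sadj k i * sadj k i = 1)%g.
Proof. exact: tperm2. Qed.

Lemma alt_gen k (H : {perm 'I_(k.+2)} -> Prop) :
  H 1%g -> (forall p q, H p -> H q -> H (p * q)%g) ->
  (forall lo, lo < k -> H (sadj k lo * sadj k (lo+1))%g) ->
  forall p, ~~ odd_perm p -> H p.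
Proof.
move=> H1 HM Hg.
have Hexp : forall p j, H p -> H (p ^+ j)%g.
  move=> p j Hp; elim: j => [|j IH]; first by rewrite expg0.
  by rewrite expgS; apply: HM.
have Hinv : forall p, H p -> H p^-1%g by move=> p Hp; rewrite invg_expg; apply: Hexp.
have Hup : forall i d, i + d < k -> H (sadj k i * sadj k (i + d.+1))%g.
  move=> i d; elim: d => [|d IH] hid; first by rewrite addn1 -[i.+1]addn1; apply: Hg; lia.
  have -> : i + d.+2 = (i + d.+1) + 1 by lia.
  rewrite (mid _ _ (sadj2 k (i + d.+1))).
  by apply: HM; [apply: IH; lia | apply: Hg; lia].
have Hpair : forall i j, i <= k -> j <= k -> H (sadj k i * sadj k j)%g.
  move=> i j hi hj; case: (ltngtP i j) => hij.
  - have -> : j = i + (j - i - 1).+1 by lia.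
    apply: Hup; lia.
  - have -> : (sadj k i * sadj k j = (sadj k j * sadj k i)^-1)%g.
      by rewrite invgM /sadj !tpermV.
    apply: Hinv; have -> : i = j + (i - j - 1).+1 by lia.
    apply: Hup; lia.
  - by rewrite hij /sadj tperm2.
pose A := [set sadj k (nat_of_ord i) | i : 'I_(k.+1)].
have sA : forall i, i <= k -> sadj k i \in <<A>>%g.
  by move=> i hi; apply: mem_gen; apply/imsetP; exists (inord i) => //; rewrite inordK.
have T0 : forall m, m <= k.+1 -> tperm (inord 0) (inord m) \in <<A>>%g.
  elim=> [|m IH] hm; first by rewrite tperm1 group1.
  case: m IH hm => [|m] IH hm; first by apply: (sA 0).
  have -> : tperm (inord 0) (inord m.+2) = (tperm (inord 0) (inord m.+1) ^ sadj k m.+1)%g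
     :> {perm 'I_(k.+2)}.
    rewrite tpermJ /sadj tpermD; last 2 first.
    - by rewrite -val_eqE /= !inordK; lia.
    - by rewrite -val_eqE /= !inordK; lia.
    by rewrite tpermL addn1.
  by apply: groupJ; [apply: IH; lia | apply: sA; lia].
have all : forall p : {perm 'I_(k.+2)}, p \in <<A>>%g.
  move=> p; suff : [set: {perm 'I_(k.+2)}] \subset <<A>>%g by move/subsetP; apply; rewrite inE.
  rewrite -(gen_tperm (inord 0)) gen_subG.
  apply/subsetP => q /imsetP [y _ ->]; rewrite -(inord_val y); apply: T0.
  exact: (ltn_ord y).
have claim : forall p : {perm 'I_(k.+2)}, p \in <<A>>%g ->
    (~~ odd_perm p -> H p) /\ (odd_perm p -> H (sadj k 0 * p)%g).
  move=> p /gen_prodgP [N [c cA ->]]; elim: N c cA => [|N IH] c cA.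
    by rewrite big_ord0 odd_perm1; split.
  rewrite big_ord_recl.
  have [i _ ci] : exists2 i : 'I_(k.+1), true & c ord0 = sadj k i.
    by case/imsetP: (cA ord0) => i _ ->; exists i.
  have hi : (nat_of_ord i) <= k by have := ltn_ord i; lia.
  case: (IH (fun j => c (lift ord0 j)) (fun j => cA _)) => IH1 IH2.
  rewrite ci /sadj odd_mul_tperm sadj_neq // /=.
  case: (boolP (odd_perm _)) => hodd /=; split => // _.
  - have -> : (tperm (inord i) (inord (i + 1)) * \prod_(j < N) c (lift ord0 j) =
      (sadj k i * sadj k 0) * (sadj k 0 * \prod_(j < N) c (lift ord0 j)))%g.
      by rewrite -(mid _ _ (sadj2 k 0)).
    by apply: HM; [apply: Hpair | apply: IH2].
  - rewrite mulgA; apply: HM; [exact: (Hpair 0 i) | exact: IH1].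
move=> p hp; exact: (proj1 (claim p (all p)) hp).
Qed.

Theorem proposition4p4 (n k : nat) (hn : 2 <= n) (hk : 1 <= k)
  (pi : {perm 'I_(k.+2)}) (heven : ~~ odd_perm pi) :
  hom_homotopic (@ssk_adj n k) (@K_adj k)
    (@canon_col n k) (fun S => pi (canon_col S)).
Proof.
have hn0 : 0 < n by apply: ltnW.
have hc : is_hom (@ssk_adj n k) (@K_adj k) (@canon_col n k).
  move=> u v H; rewrite !canon_colE //.
  by apply: homN_hom (Fh_hom _ hn0) u v H => S; apply: Fh_bound.
apply: (@alt_gen k (fun p => hom_homotopic (@ssk_adj n k) (@K_adj k)
    (@canon_col n k) (fun S => p (canon_col S)))) => //.
- by apply: hh_ext (hh_refl hc) => // S; rewrite perm1.
- move=> p q Hp Hq.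
  have := hh_comp (p := fun x => q x) (fun a b => _) Hp.
  move=> /(_ ltac:(by move=> a b; rewrite /K_adj (inj_eq perm_inj))) Hqp.
  by apply: hh_ext (hh_trans Hq Hqp) => // S; rewrite permM.
- move=> lo hlo.
  have -> : (sadj k lo * sadj k (lo + 1))%g = sig3 k lo by rewrite /sadj /sig3 -addnA.
  exact: window.
Qed.
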